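(* Let $q\in\mathbb{C}^*$ with $|q|>1$. Define the entire functions $\widetilde{E}_0(x)=1$ and, for $m\geq1$, $\widetilde{E}_m(x)=f_1(x)\exp\left(\sum_{k=1}^m\frac{x^k}{k(q^k-1)}\right)$, where $f_1(x)=\sum_{n\geq0}\frac{x^n}{(q;q)_n}$. Then there exist constants $C_1,C_2>0$ such that for all integers $m\geq0$ and all $x\in\mathbb{C}$ with $|x|\leq1$, $$|1-\widetilde{E}_m(x)|\leq C_1(C_2|x|)^{m+1}.$$
   Context: $(q;q)_0=1$ and $(q;q)_n=\prod_{k=1}^n(1-q^k)$ for $n\geq1$. *)

(* Defs.v *)
From Stdlib Require Import Reals ClassicalEpsilon Factorial.
From Coquelicot Require Import Coquelicot.
Open Scope C_scope.

(* Sum of a complex series: the (unique) l with [is_series a l] when the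
   series converges (chosen by classical choice; arbitrary otherwise). *)
Definition Csum (a : nat -> C) : C :=
  epsilon (inhabits (RtoC 0)) (fun l : C => is_series a l).

Fixpoint qpoch (q : C) (n : nat) : C :=
  match n with
  | O => RtoC 1
  | S n' => qpoch q n' * (RtoC 1 - q ^ (S n'))
  end.

Definition Cexp (z : C) : C := Csum (fun n => z ^ n / RtoC (INR (fact n))).

Definition f1 (q x : C) : C := Csum (fun n => x ^ n / qpoch q n).

Definition Etilde (q : C) (m : nat) (x : C) : C :=
  match m with
  | O => RtoC 1
  | S _ =>
      f1 q x *
      Cexp (sum_n_m (fun k : nat => x ^ k / (RtoC (INR k) * (q ^ k - RtoC 1))) 1 m)
  end.

(* Main.v *)
Require Import Defs.
From Stdlib Require Import Reals ClassicalEpsilon.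
From Coquelicot Require Import Coquelicot.
From Stdlib Require Import Lra Lia Factorial.
Open Scope C_scope.

Lemma CnormE (x : C) : Cmod x = @norm C_AbsRing C_NormedModule x.
Proof. reflexivity. Qed.

Lemma Csum_correct (a : nat -> C) : ex_series a -> is_series a (Csum a).
Proof. intros [l Hl]. unfold Csum. apply epsilon_spec. now exists l. Qed.

Lemma is_series_Cmod_le (a : nat -> C) (b : nat -> R) (la : C) (lb : R) :
  is_series a la -> is_series b lb -> (forall n, Cmod (a n) <= b n)%R -> (Cmod la <= lb)%R.
Proof.
  intros Ha Hb H.
  assert (H1 : is_lim_seq (fun n => Cmod (sum_n a n)) (Cmod la)).
  { unfold is_lim_seq. rewrite CnormE.
    eapply filterlim_ext. intros; rewrite CnormE; reflexivity.
    eapply filterlim_comp. exact Ha. exact (@filterlim_norm C_AbsRing C_NormedModule la). }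
  assert (H2 : is_lim_seq (sum_n b) lb) by exact Hb.
  refine (is_lim_seq_le _ _ _ _ _ H1 H2).
  intros n. rewrite CnormE. eapply Rle_trans. apply (@norm_sum_n_m C_AbsRing C_NormedModule a 0 n).
  apply sum_n_m_le. intros k. rewrite <- CnormE. apply H.
Qed.

Lemma is_series_C_unique (a : nat -> C) (l1 l2 : C) : is_series a l1 -> is_series a l2 -> l1 = l2.
Proof.
  intros H1 H2.
  pose proof (is_series_minus _ _ _ _ H1 H2) as H.
  assert (Hz : is_series (fun _ : nat => 0%R) 0%R).
  { pose proof (is_series_scal 0%R _ _ (is_series_geom 0%R ltac:(rewrite Rabs_R0; lra))) as H0.
    unfold scal in H0; simpl in H0; unfold mult in H0; simpl in H0. rewrite Rmult_0_l in H0.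
    eapply is_series_ext; [|exact H0]. intros; simpl; ring. }
  pose proof (is_series_Cmod_le _ _ _ _ H Hz) as Hl.
  assert (Cmod (plus l1 (opp l2)) <= 0)%R.
  { apply Hl. intros n. change (plus (a n) (opp (a n))) with (a n - a n).
    replace (a n - a n) with (RtoC 0) by ring. rewrite Cmod_0; simpl; lra. }
  change (plus l1 (opp l2)) with (l1 - l2) in H0.
  pose proof (Cmod_ge_0 (l1 - l2)).
  assert (l1 - l2 = 0) by (apply Cmod_eq_0; lra).
  replace l1 with ((l1 - l2) + l2) by ring. rewrite H4. ring.
Qed.

Lemma Csum_eq (a : nat -> C) l : is_series a l -> Csum a = l.
Proof.
  intros H. apply (is_series_C_unique a). apply Csum_correct. now exists l. exact H.
Qed.

Lemma ex_series_C_dom (a : nat -> C) (b : nat -> R) :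
  (forall n, Cmod (a n) <= b n)%R -> ex_series b -> ex_series a.
Proof.
  intros H Hb. apply (@ex_series_le C_AbsRing C_CompleteNormedModule a b).
  intros n. rewrite <- CnormE. apply H. exact Hb.
Qed.

Lemma Csum_dom (a : nat -> C) (b : nat -> R) lb :
  (forall n, Cmod (a n) <= b n)%R -> is_series b lb ->
  is_series a (Csum a) /\ (Cmod (Csum a) <= lb)%R.
Proof.
  intros H Hb. assert (Ha : is_series a (Csum a)).
  { apply Csum_correct. eapply ex_series_C_dom. exact H. now exists lb. }
  split; auto. eapply is_series_Cmod_le; eauto.
Qed.

Lemma is_series_Rscal (c : R) (a : nat -> R) (l : R) :
  is_series a l -> is_series (fun n => c * a n)%R (c * l)%R.
Proof. intros H. exact (@is_series_scal R_AbsRing R_NormedModule c a l H). Qed.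

Lemma is_series_Cscal (c : C) (a : nat -> C) (l : C) :
  is_series a l -> is_series (fun n => c * a n) (c * l).
Proof. intros H. exact (@is_series_scal C_AbsRing C_NormedModule c a l H). Qed.

Lemma is_series_Cplus (a b : nat -> C) (la lb : C) :
  is_series a la -> is_series b lb -> is_series (fun n => a n + b n) (la + lb).
Proof. intros H1 H2. exact (@is_series_plus C_AbsRing C_NormedModule a b la lb H1 H2). Qed.

Lemma is_series_Cminus (a b : nat -> C) (la lb : C) :
  is_series a la -> is_series b lb -> is_series (fun n => a n - b n) (la - lb).
Proof. intros H1 H2. exact (@is_series_minus C_AbsRing C_NormedModule a b la lb H1 H2). Qed.

Lemma is_series_Cshift (a : nat -> C) (l : C) :
  is_series a l -> is_series (fun n => a (S n)) (l - a 0%nat).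
Proof.
  intros H. apply (@is_series_incr_1 C_AbsRing C_NormedModule).
  match goal with |- is_series _ ?L => replace L with l end. exact H.
  change (l = l - a 0%nat + a 0%nat). ring.
Qed.

Lemma is_series_Cunshift (a : nat -> C) (l : C) :
  is_series (fun n => a (S n)) l -> is_series a (l + a 0%nat).
Proof.
  intros H. apply (@is_series_decr_1 C_AbsRing C_NormedModule).
  match goal with |- is_series _ ?L => replace L with l end. exact H.
  change (l = l + a 0%nat + - a 0%nat). ring.
Qed.

Lemma is_series_Runshift (a : nat -> R) (l : R) :
  is_series (fun n => a (S n)) l -> is_series a (l + a 0%nat)%R.
Proof.
  intros H. apply (@is_series_decr_1 R_AbsRing R_NormedModule).
  match goal with |- is_series _ ?L => replace L with l end. exact H.
  change (l = l + a 0%nat + - a 0%nat)%R. ring.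
Qed.

Lemma is_series_Cext (a b : nat -> C) (l l' : C) :
  (forall n, a n = b n) -> l = l' -> is_series a l -> is_series b l'.
Proof. intros H1 H2 H. rewrite <- H2. exact (@is_series_ext C_AbsRing C_NormedModule a b l H1 H). Qed.

Lemma is_series_Rext (a b : nat -> R) (l l' : R) :
  (forall n, a n = b n) -> l = l' -> is_series a l -> is_series b l'.
Proof. intros H1 H2 H. rewrite <- H2. exact (@is_series_ext R_AbsRing R_NormedModule a b l H1 H). Qed.

Lemma is_series_Ctail (a : nat -> C) (l : C) n :
  is_series a l -> is_series (fun k => a (S n + k)%nat) (l - sum_n a n).
Proof.
  intros H. apply (@is_series_incr_n C_AbsRing C_NormedModule a (S n)). lia.
  match goal with |- is_series _ ?L => replace L with l end. exact H.
  change (l = l - sum_n a n + sum_n a n). ring.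
Qed.

Lemma Cmod_div_R (z : C) (r : R) : (0 < r)%R -> Cmod (z / RtoC r) = (Cmod z / r)%R.
Proof.
  intros Hr. rewrite Cmod_div. rewrite Cmod_R, Rabs_pos_eq; lra.
  intro H. apply RtoC_inj in H. lra.
Qed.

Lemma exp_series (x : R) : is_series (fun n => (x ^ n / INR (fact n))%R) (exp x).
Proof.
  pose proof (is_exp_Reals x) as H. apply is_pseries_R in H.
  eapply is_series_ext; [|exact H]. intros n. simpl. unfold Rdiv. ring.
Qed.

Lemma Cexp_correct (w : C) :
  is_series (fun n => w ^ n / RtoC (INR (fact n))) (Cexp w) /\ (Cmod (Cexp w) <= exp (Cmod w))%R.
Proof.
  apply Csum_dom with (b := fun n => (Cmod w ^ n / INR (fact n))%R).
  - intros n. rewrite Cmod_div_R by apply INR_fact_lt_0. rewrite Cmod_pow. lra.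
  - apply exp_series.
Qed.

Lemma is_series_finite0 (a : nat -> C) : (forall n, a (S n) = 0) -> is_series a (a 0%nat).
Proof.
  intros H. unfold is_series. apply filterlim_ext with (fun _ => a 0%nat).
  - intros n; induction n. rewrite sum_O; auto.
    rewrite sum_Sn, H, <- IHn. change (a 0%nat = a 0%nat + 0). ring.
  - apply filterlim_const.
Qed.

Lemma Cexp_0 : Cexp 0 = 1.
Proof.
  apply Csum_eq. 
  replace (RtoC 1) with ((fun n => 0 ^ n / RtoC (INR (fact n))) 0%nat).
  apply is_series_finite0. intros n.
  change ((0 * 0 ^ n) / RtoC (INR (fact (S n))) = 0). unfold Cdiv. rewrite !Cmult_0_l. reflexivity.
  simpl. field. 
Qed.

Lemma Ebound (z d : C) (Rr : R) k : (Cmod z <= Rr)%R -> (Cmod (z + d) <= Rr)%R ->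
 (Cmod ((z+d)^(S (S k)) - z^(S (S k)) - RtoC (INR (S (S k))) * d * z^(S k))
   <= INR (S (S k)) * INR (S k) / 2 * Cmod d ^ 2 * Rr ^ k)%R.
Proof.
  intros Hz Hzd. assert (HR : (0 <= Rr)%R) by (pose proof (Cmod_ge_0 z); lra).
  induction k.
  - replace ((z + d) ^ 2 - z ^ 2 - RtoC (INR 2) * d * z ^ 1) with (d * d).
    rewrite Cmod_mult. simpl. lra.
    simpl. rewrite RtoC_plus. ring.
  - set (E := (z + d) ^ S (S k) - z ^ S (S k) - RtoC (INR (S (S k))) * d * z ^ S k) in *.
    replace ((z + d) ^ S (S (S k)) - z ^ S (S (S k)) - RtoC (INR (S (S (S k)))) * d * z ^ S (S k))
      with ((z + d) * E + RtoC (INR (S (S k))) * (d * d) * z ^ S k).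
    2:{ unfold E. rewrite (S_INR (S (S k))). rewrite RtoC_plus. simpl. ring. }
    eapply Rle_trans. apply Cmod_triangle.
    rewrite !Cmod_mult, Cmod_pow, Cmod_R, Rabs_pos_eq by apply pos_INR.
    assert (Hp : (Cmod z ^ S k <= Rr ^ S k)%R) by (apply pow_incr; split; [apply Cmod_ge_0|auto]).
    assert (H1 : (Cmod (z + d) * Cmod E <= Rr * (INR (S (S k)) * INR (S k) / 2 * Cmod d ^ 2 * Rr ^ k))%R).
    { apply Rmult_le_compat; auto using Cmod_ge_0. }
    assert (H2 : (INR (S (S k)) * (Cmod d * Cmod d) * Cmod z ^ S k <= INR (S (S k)) * (Cmod d * Cmod d) * Rr ^ S k)%R).
    { apply Rmult_le_compat_l; auto. apply Rmult_le_pos. apply pos_INR. pose proof (Cmod_ge_0 d); nra. }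
    eapply Rle_trans. apply Rplus_le_compat; [exact H1| exact H2].
    rewrite !S_INR. simpl. nra.
Qed.

Lemma RtoC_neq0 (r : R) : r <> 0%R -> RtoC r <> 0.
Proof. intros H H'. apply RtoC_inj in H'. auto. Qed.

Lemma fact_C_neq0 n : RtoC (INR (fact n)) <> 0.
Proof. apply RtoC_neq0, INR_fact_neq_0. Qed.

Lemma Cexp_deriv (w d : C) (R0 : R) : (Cmod w <= R0)%R -> (Cmod (w + d) <= R0)%R ->
  (Cmod (Cexp (w + d) - Cexp w - d * Cexp w) <= Cmod d ^ 2 / 2 * exp R0)%R.
Proof.
  intros Hw Hwd.
  destruct (Cexp_correct (w + d)) as [H1 _]. destruct (Cexp_correct w) as [H2 _].
  pose proof (is_series_Cminus _ _ _ _ H1 H2) as H3.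
  set (U := fun n => (w + d) ^ n / RtoC (INR (fact n)) - w ^ n / RtoC (INR (fact n))) in H3.
  assert (H4 : is_series (fun n => U (S n)) (Cexp (w + d) - Cexp w)).
  { pose proof (is_series_Cshift _ _ H3) as H. eapply is_series_Cext; [| |exact H]. reflexivity.
    unfold U. simpl. field. }
  pose proof (is_series_Cscal d _ _ H2) as H5.
  pose proof (is_series_Cminus _ _ _ _ H4 H5) as H6.
  set (b := fun n => match n with O => 0%R | S k => (Cmod d ^ 2 / 2 * (R0 ^ k / INR (fact k)))%R end).
  assert (Hb : is_series b (Cmod d ^ 2 / 2 * exp R0)%R).
  { pose proof (is_series_Runshift b _ (is_series_Rscal (Cmod d ^ 2 / 2)%R _ _ (exp_series R0))) as H.
    eapply is_series_Rext; [| |exact H]. reflexivity. simpl. ring. }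
  apply (is_series_Cmod_le _ _ _ _ H6 Hb).
  intros n. unfold U, b. destruct n as [|k].
  - replace (((w + d) ^ 1 / RtoC (INR (fact 1)) - w ^ 1 / RtoC (INR (fact 1))) - d * (w ^ 0 / RtoC (INR (fact 0)))) with (RtoC 0).
    rewrite Cmod_0; lra. simpl. field.
  - replace (((w + d) ^ S (S k) / RtoC (INR (fact (S (S k)))) - w ^ S (S k) / RtoC (INR (fact (S (S k))))) - d * (w ^ S k / RtoC (INR (fact (S k)))))
      with (((w+d)^(S (S k)) - w^(S (S k)) - RtoC (INR (S (S k))) * d * w^(S k)) / RtoC (INR (fact (S (S k))))).
    2:{ change (fact (S (S k))) with (S (S k) * fact (S k))%nat. rewrite mult_INR, RtoC_mult.
        field. split; [apply fact_C_neq0| apply RtoC_neq0, not_0_INR; lia]. }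
    rewrite Cmod_div_R by apply INR_fact_lt_0.
    pose proof (Ebound w d R0 k Hw Hwd) as HE.
    change (fact (S (S k))) with (S (S k) * (S k * fact k))%nat. rewrite !mult_INR.
    assert (0 < INR (S (S k)))%R by (apply lt_0_INR; lia).
    assert (0 < INR (S k))%R by (apply lt_0_INR; lia).
    pose proof (INR_fact_lt_0 k).
    assert (P3 : (0 < INR (S (S k)) * (INR (S k) * INR (fact k)))%R).
    { apply Rmult_lt_0_compat; auto. apply Rmult_lt_0_compat; auto. }
    apply (Rmult_le_reg_r (INR (S (S k)) * (INR (S k) * INR (fact k)))). exact P3.
    unfold Rdiv. rewrite Rmult_assoc, Rinv_l by lra. rewrite Rmult_1_r.
    eapply Rle_trans. exact HE. right. field. lra.
Qed.

Definition QD (F D : R -> C) (M B : R) : Prop :=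
 (forall t, (0 <= t <= 1)%R -> (Cmod (F t) <= B)%R /\ (Cmod (D t) <= B)%R) /\
 (forall t h, (0 <= t)%R -> (0 <= h)%R -> (t + h <= 1)%R ->
    (Cmod (F (t+h)%R - F t - RtoC h * D t) <= M * h^2)%R).

Lemma QD_nonneg F D M B : QD F D M B -> (0 <= M)%R /\ (0 <= B)%R.
Proof.
  intros [H1 H2]. split.
  - specialize (H2 0%R 1%R ltac:(lra) ltac:(lra) ltac:(lra)). pose proof (Cmod_ge_0 (F (0 + 1)%R - F 0%R - RtoC 1 * D 0%R)). 
    simpl in H2. lra.
  - destruct (H1 0%R ltac:(lra)) as [H _]. pose proof (Cmod_ge_0 (F 0%R)). lra.
Qed.

Lemma Cmod_mult_le (x y : C) (a b : R) : (Cmod x <= a)%R -> (Cmod y <= b)%R -> (Cmod (x * y) <= a * b)%R.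
Proof.
  intros. rewrite Cmod_mult. apply Rmult_le_compat; auto using Cmod_ge_0.
Qed.

Lemma Cmod_Rpos (h : R) : (0 <= h)%R -> Cmod (RtoC h) = h.
Proof. intros. rewrite Cmod_R. apply Rabs_pos_eq; auto. Qed.

Lemma small_zero (x M : R) : (0 <= x)%R -> (forall n : nat, (x * INR (S n) <= M)%R) -> x = 0%R.
Proof.
  intros Hx H. destruct (Rle_lt_or_eq_dec 0 x Hx) as [Hp|]; auto.
  assert (HM : (0 <= M / x)%R). { specialize (H O). simpl in H. apply Rdiv_le_0_compat; lra. }
  destruct (nfloor_ex (M / x) HM) as [n [_ Hn]].
  specialize (H n). rewrite S_INR in H.
  assert (M / x * x = M)%R by (field; lra).
  nra.
Qed.

Lemma QD_const F D M B : QD F D M B -> (forall t, (0 <= t <= 1)%R -> D t = 0) -> F 1%R = F 0%R.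
Proof.
  intros HQ HD. destruct (QD_nonneg _ _ _ _ HQ) as [HM HB]. destruct HQ as [_ HQ].
  assert (Hall : forall n : nat, (Cmod (F 1%R - F 0%R) * INR (S n) <= M)%R).
  { intros n. set (N := INR (S n)). assert (HN : (0 < N)%R) by (apply lt_0_INR; lia).
    assert (Hk : forall k, (k <= S n)%nat -> (Cmod (F (INR k / N)%R - F 0%R) <= INR k * M / (N * N))%R).
    { induction k; intros Hk.
      - simpl. unfold Rdiv. rewrite Rmult_0_l. replace (F 0%R - F 0%R) with (RtoC 0) by ring.
        rewrite Cmod_0. lra.
      - assert (Hk' : (INR k <= N)%R) by (apply le_INR; lia).
        pose proof (pos_INR k).
        specialize (HQ (INR k / N)%R (/ N)%R).
        assert (E : (INR k / N + / N = INR (S k) / N)%R) by (rewrite S_INR; field; lra).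
        rewrite E in HQ. rewrite HD in HQ.
        2:{ split. apply Rdiv_le_0_compat; lra. apply Rmult_le_reg_r with N; auto. unfold Rdiv. rewrite Rmult_assoc, Rinv_l; lra. }
        replace (F (INR (S k) / N)%R - F (INR k / N)%R - RtoC (/ N) * 0) with (F (INR (S k) / N)%R - F (INR k / N)%R) in HQ by ring.
        replace (F (INR (S k) / N)%R - F 0%R) with ((F (INR (S k) / N)%R - F (INR k / N)%R) + (F (INR k / N)%R - F 0%R)) by ring.
        eapply Rle_trans. apply Cmod_triangle.
        assert (H1 : (Cmod (F (INR (S k) / N)%R - F (INR k / N)%R) <= M * (/ N) ^ 2)%R).
        { apply HQ. apply Rdiv_le_0_compat; lra. left; apply Rinv_0_lt_compat; lra.
          apply Rmult_le_reg_r with N; auto. unfold Rdiv. rewrite Rmult_assoc, Rinv_l by lra.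
          rewrite S_INR. assert (INR (S k) <= N)%R by (apply le_INR; lia). rewrite S_INR in H0. lra. }
        specialize (IHk ltac:(lia)).
        eapply Rle_trans. apply Rplus_le_compat; [exact H1| exact IHk].
        right. rewrite S_INR. field. lra. }
    specialize (Hk (S n) (le_n _)). fold N in Hk. replace (N / N)%R with 1%R in Hk by (field; lra).
    apply Rmult_le_reg_r with (/ N)%R. apply Rinv_0_lt_compat; lra.
    rewrite Rmult_assoc, Rinv_r by lra. eapply Rle_trans. rewrite Rmult_1_r. exact Hk.
    right. field. lra. }
  apply small_zero in Hall; auto using Cmod_ge_0.
  apply Cmod_eq_0 in Hall. replace (F 1%R) with ((F 1%R - F 0%R) + F 0%R) by ring. rewrite Hall. ring.
Qed.

Lemma QD_mult F D M B G E M' B' : QD F D M B -> QD G E M' B' ->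
  QD (fun t => F t * G t) (fun t => F t * E t + D t * G t) (2*B*M' + B*B' + M*B') (2*B*B').
Proof.
  intros HF HG. destruct (QD_nonneg _ _ _ _ HF) as [HM HB]. destruct (QD_nonneg _ _ _ _ HG) as [HM' HB'].
  destruct HF as [HF1 HF2]. destruct HG as [HG1 HG2]. split.
  - intros t Ht. destruct (HF1 t Ht) as [Ha Hb]. destruct (HG1 t Ht) as [Hc Hd]. split.
    + eapply Rle_trans. apply Cmod_mult_le; eauto. nra.
    + eapply Rle_trans. apply Cmod_triangle.
      pose proof (Cmod_mult_le _ _ _ _ Ha Hd). pose proof (Cmod_mult_le _ _ _ _ Hb Hc). lra.
  - intros t h Ht Hh Hth.
    assert (Ht0 : (0 <= t <= 1)%R) by lra. assert (Ht1 : (0 <= t + h <= 1)%R) by lra.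
    destruct (HF1 t Ht0) as [Fa Da]. destruct (HG1 t Ht0) as [Ga Ea].
    destruct (HG1 (t+h)%R Ht1) as [Gb _].
    specialize (HF2 t h Ht Hh Hth). specialize (HG2 t h Ht Hh Hth).
    set (e1 := F (t + h)%R - F t - RtoC h * D t) in *.
    set (e2 := G (t + h)%R - G t - RtoC h * E t) in *.
    replace (F (t + h)%R * G (t + h)%R - F t * G t - RtoC h * (F t * E t + D t * G t))
      with (F t * e2 + (RtoC h * RtoC h) * (D t * E t) + RtoC h * (D t * e2) + e1 * G (t+h)%R)
      by (unfold e1, e2; ring).
    assert (Hh1 : (Cmod (RtoC h) <= 1)%R) by (rewrite Cmod_Rpos; lra).
    assert (Hhh : (Cmod (RtoC h * RtoC h) <= h^2)%R) by (rewrite Cmod_mult, Cmod_Rpos; lra).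
    pose proof (Cmod_mult_le _ _ _ _ Fa HG2) as T1.
    pose proof (Cmod_mult_le _ _ _ _ Hhh (Cmod_mult_le _ _ _ _ Da Ea)) as T2.
    pose proof (Cmod_mult_le _ _ _ _ Hh1 (Cmod_mult_le _ _ _ _ Da HG2)) as T3.
    pose proof (Cmod_mult_le _ _ _ _ HF2 Gb) as T4.
    eapply Rle_trans. apply Cmod_triangle. eapply Rle_trans. apply Rplus_le_compat_r. apply Cmod_triangle.
    eapply Rle_trans. apply Rplus_le_compat_r. apply Rplus_le_compat_r. apply Cmod_triangle.
    assert (0 <= h^2)%R by nra.
    nra.
Qed.

Lemma exp_mono (a b : R) : (a <= b)%R -> (exp a <= exp b)%R.
Proof. intros H. destruct (Rle_lt_or_eq_dec a b H) as [H'|H']. left; apply exp_increasing; auto. subst; lra. Qed.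

Lemma Cexp_bound (w : C) (R0 : R) : (Cmod w <= R0)%R -> (Cmod (Cexp w) <= exp R0)%R.
Proof. intros H. eapply Rle_trans. apply Cexp_correct. apply exp_mono; auto. Qed.

Lemma QD_exp G D M B : QD G D M B ->
  QD (fun t => Cexp (G t)) (fun t => D t * Cexp (G t)) (M * exp B + (B + M)^2 / 2 * exp B) ((B+1) * exp B).
Proof.
  intros HG. destruct (QD_nonneg _ _ _ _ HG) as [HM HB]. destruct HG as [HG1 HG2].
  pose proof (exp_pos B) as HeB. split.
  - intros t Ht. destruct (HG1 t Ht) as [Ha Hb]. pose proof (Cexp_bound _ _ Ha). split.
    + nra.
    + eapply Rle_trans. apply Cmod_mult_le; eauto. nra.
  - intros t h Ht Hh Hth.
    assert (Ht0 : (0 <= t <= 1)%R) by lra. assert (Ht1 : (0 <= t + h <= 1)%R) by lra.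
    destruct (HG1 t Ht0) as [Ga Da]. destruct (HG1 (t+h)%R Ht1) as [Gb _].
    specialize (HG2 t h Ht Hh Hth).
    set (w := G t) in *. set (e := G (t + h)%R - w - RtoC h * D t) in *.
    set (Dl := G (t + h)%R - w).
    assert (HGt : G (t+h)%R = w + Dl) by (unfold Dl; ring).
    rewrite HGt in Gb |- *.
    replace (Cexp (w + Dl) - Cexp w - RtoC h * (D t * Cexp w)) with
      ((Cexp (w + Dl) - Cexp w - Dl * Cexp w) + e * Cexp w) by (unfold e, Dl; ring).
    eapply Rle_trans. apply Cmod_triangle.
    pose proof (Cexp_deriv w Dl B Ga Gb) as T1.
    pose proof (Cmod_mult_le _ _ _ _ HG2 (Cexp_bound _ _ Ga)) as T2.
    assert (HDl : (Cmod Dl <= h * (B + M))%R).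
    { replace Dl with (RtoC h * D t + e) by (unfold e, Dl; ring).
      eapply Rle_trans. apply Cmod_triangle. rewrite Cmod_mult, Cmod_Rpos by lra.
      assert (h * Cmod (D t) <= h * B)%R by (apply Rmult_le_compat_l; lra). assert (M * h^2 <= M * h)%R by (assert (h*h <= h*1)%R by (apply Rmult_le_compat_l; lra); simpl; nra). lra. }
    assert (HDl2 : (Cmod Dl ^ 2 <= h^2 * (B + M)^2)%R).
    { pose proof (Cmod_ge_0 Dl). replace (h^2 * (B+M)^2)%R with ((h * (B+M))^2)%R by ring.
      apply pow_incr. lra. }
    assert (Cmod Dl ^ 2 / 2 * exp B <= h ^ 2 * (B + M) ^ 2 / 2 * exp B)%R.
    { apply Rmult_le_compat_r; lra. }
    nra.
Qed.

Lemma QD_lin (c a : C) : QD (fun t => c + RtoC t * a) (fun _ => a) 0 (Cmod c + Cmod a).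
Proof.
  split.
  - intros t Ht. split.
    + eapply Rle_trans. apply Cmod_triangle. rewrite Cmod_mult, Cmod_Rpos by lra.
      pose proof (Cmod_ge_0 a). nra.
    + pose proof (Cmod_ge_0 c). lra.
  - intros t h _ _ _. replace (c + RtoC (t + h) * a - (c + RtoC t * a) - RtoC h * a) with (RtoC 0).
    rewrite Cmod_0. lra. rewrite RtoC_plus. ring.
Qed.

Lemma Cexp_add (a b : C) : Cexp (a + b) = Cexp a * Cexp b.
Proof.
  pose proof (QD_mult _ _ _ _ _ _ _ _ (QD_exp _ _ _ _ (QD_lin 0 a)) (QD_exp _ _ _ _ (QD_lin (a + b) (- a)))) as H.
  apply QD_const in H.
  - simpl in H. replace (0 + RtoC 1 * a) with a in H by ring. replace (a + b + RtoC 1 * - a) with b in H by ring.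
    replace (0 + RtoC 0 * a) with (RtoC 0) in H by ring. replace (a + b + RtoC 0 * - a) with (a + b) in H by ring.
    rewrite Cexp_0 in H. rewrite H. ring.
  - intros t _. simpl. ring.
Qed.

Lemma Cinv_0 : Cinv (RtoC 0) = RtoC 0.
Proof. unfold Cinv. simpl. unfold Rdiv. rewrite !Rmult_0_l, Ropp_0, Rmult_0_l. reflexivity. Qed.

Lemma Cdiv_0 (z : C) : z / RtoC 0 = 0.
Proof. unfold Cdiv. rewrite Cinv_0. ring. Qed.

Definition Lser (y : C) := Csum (fun k => y ^ k / RtoC (INR k)).

Lemma Lser_correct (y : C) (p : R) : (Cmod y <= p)%R -> (p < 1)%R ->
  is_series (fun k => y ^ k / RtoC (INR k)) (Lser y) /\ (Cmod (Lser y) <= / (1 - p))%R.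
Proof.
  intros Hy Hp. assert (H0 : (0 <= p)%R) by (pose proof (Cmod_ge_0 y); lra).
  apply Csum_dom with (b := fun k => (p ^ k)%R).
  - intros [|k]. simpl. rewrite Cdiv_0, Cmod_0. lra.
    rewrite Cmod_div_R by (apply lt_0_INR; lia). rewrite Cmod_pow.
    assert (1 <= INR (S k))%R by (apply (le_INR 1); lia).
    assert (Cmod y ^ S k <= p ^ S k)%R by (apply pow_incr; split; auto using Cmod_ge_0).
    assert (0 <= Cmod y ^ S k)%R by (apply pow_le, Cmod_ge_0).
    unfold Rdiv. apply Rle_trans with (Cmod y ^ S k * 1)%R; [|lra].
    apply Rmult_le_compat_l; auto. rewrite <- Rinv_1. apply Rinv_le_contravar; lra.
  - apply is_series_geom. rewrite Rabs_pos_eq; lra.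
Qed.

Lemma Lser_0 : Lser 0 = 0.
Proof.
  apply Csum_eq.
  assert (Hz : forall n, (fun k => 0 ^ k / RtoC (INR k)) (S n) = 0).
  { intros n. change ((0 * 0 ^ n) / RtoC (INR (S n)) = 0). unfold Cdiv. rewrite !Cmult_0_l. reflexivity. }
  pose proof (is_series_finite0 _ Hz) as H. eapply is_series_Cext; [| |exact H]; [reflexivity|].
  simpl. apply Cdiv_0.
Qed.

Lemma Cgeom (z : C) : (Cmod z < 1)%R -> is_series (fun n => z ^ n) (/ (1 - z)).
Proof.
  intros Hz.
  destruct (Csum_dom (fun n => z ^ n) (fun n => Cmod z ^ n)%R (/ (1 - Cmod z))%R) as [H _].
  - intros n. rewrite Cmod_pow. lra.
  - apply is_series_geom. rewrite Rabs_pos_eq; auto using Cmod_ge_0.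
  - set (G := Csum (fun n => z ^ n)) in *.
    pose proof (is_series_Cshift _ _ H) as H1. pose proof (is_series_Cscal z _ _ H) as H2.
    assert (E : G - z ^ 0 = z * G) by (apply (is_series_C_unique (fun n => z ^ S n)); auto).
    assert (Hz1 : 1 - z <> 0).
    { intro H3. assert (z = 1) by (replace z with (1 - (1 - z)) by ring; rewrite H3; ring).
      subst. rewrite Cmod_1 in Hz. lra. }
    replace (/ (1 - z)) with G. exact H.
    assert (E2 : (1 - z) * G = 1) by (replace ((1-z)*G) with (G - z*G) by ring; rewrite <- E; simpl; ring).
    replace G with (/(1-z) * ((1-z)*G)) by (field; auto). rewrite E2. ring.
Qed.

Lemma series_np (p : R) : (0 <= p < 1)%R -> is_series (fun k => (INR (S k) * p ^ k)%R) (/ (1 - p) * / (1 - p))%R.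
Proof.
  intros Hp.
  assert (Hg : is_series (fun n => p ^ n)%R (/ (1 - p))%R) by (apply is_series_geom; rewrite Rabs_pos_eq; lra).
  pose proof (is_series_mult_pos _ _ _ _ Hg Hg ltac:(intros; apply pow_le; lra) ltac:(intros; apply pow_le; lra)) as H.
  eapply is_series_Rext; [| reflexivity | exact H]. intros n.
  cbv beta. rewrite (sum_eq _ (fun _ => p ^ n)%R). rewrite sum_cte. ring.
  intros i Hi. rewrite <- pow_add. f_equal. lia.
Qed.

Lemma Cmod_1_minus (w : C) : (1 - Cmod w <= Cmod (1 - w))%R.
Proof.
  pose proof (Cmod_triangle (1 - w) w). replace (1 - w + w) with (RtoC 1) in H by ring.
  rewrite Cmod_1 in H. lra.
Qed.

Lemma Cmod_tscale (t : R) (y : C) (p : R) : (0 <= t <= 1)%R -> (Cmod y <= p)%R -> (Cmod (RtoC t * y) <= p)%R.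
Proof.
  intros Ht Hy. rewrite Cmod_mult, Cmod_Rpos by lra. pose proof (Cmod_ge_0 y). nra.
Qed.

Lemma QD_L (y : C) (p : R) : (Cmod y <= p)%R -> (p < 1)%R ->
  QD (fun t => Lser (RtoC t * y)) (fun t => y / (1 - RtoC t * y)) (/ (1-p) * / (1-p) / 2) (/ (1 - p)).
Proof.
  intros Hy Hp. assert (H0 : (0 <= p)%R) by (pose proof (Cmod_ge_0 y); lra).
  assert (Hinv : (0 < / (1 - p))%R) by (apply Rinv_0_lt_compat; lra).
  assert (Hnz : forall t, (0 <= t <= 1)%R -> 1 - RtoC t * y <> 0).
  { intros t Ht Heq. pose proof (Cmod_1_minus (RtoC t * y)). rewrite Heq, Cmod_0 in H.
    pose proof (Cmod_tscale t y p Ht Hy). lra. }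
  split.
  - intros t Ht. split.
    + apply (Lser_correct _ p); auto. apply Cmod_tscale; auto.
    + rewrite Cmod_div by auto. pose proof (Cmod_1_minus (RtoC t * y)).
      pose proof (Cmod_tscale t y p Ht Hy).
      unfold Rdiv. apply Rle_trans with (1 * / (1 - p))%R; [|lra].
      apply Rmult_le_compat; auto using Cmod_ge_0. left; apply Rinv_0_lt_compat; lra. lra.
      apply Rinv_le_contravar; lra.
  - intros t h Ht Hh Hth.
    assert (Ht0 : (0 <= t <= 1)%R) by lra. assert (Ht1 : (0 <= t + h <= 1)%R) by lra.
    set (z := RtoC t * y). set (d := RtoC h * y).
    assert (Hzd : RtoC (t + h) * y = z + d) by (unfold z, d; rewrite RtoC_plus; ring).
    rewrite Hzd.
    assert (Hz : (Cmod z <= p)%R) by (apply Cmod_tscale; auto).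
    assert (Hz2 : (Cmod (z + d) <= p)%R) by (rewrite <- Hzd; apply Cmod_tscale; auto).
    assert (Hd : (Cmod d <= h)%R) by (unfold d; rewrite Cmod_mult, Cmod_Rpos by lra; nra).
    assert (Hz1 : (Cmod z < 1)%R) by lra.
    destruct (Lser_correct (z + d) p Hz2 Hp) as [S1 _].
    destruct (Lser_correct z p Hz Hp) as [S2 _].
    pose proof (is_series_Cshift _ _ (is_series_Cminus _ _ _ _ S1 S2)) as S3.
    pose proof (is_series_Cscal d _ _ (Cgeom z Hz1)) as S4.
    pose proof (is_series_Cminus _ _ _ _ S3 S4) as S5.
    set (b := fun n => match n with O => 0%R | S k => (h^2 / 2 * (INR (S k) * p ^ k))%R end).
    assert (Hb : is_series b (h^2/2 * (/ (1 - p) * / (1 - p)))%R).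
    { pose proof (is_series_Runshift b _ (is_series_Rscal (h^2/2)%R _ _ (series_np p ltac:(lra)))) as H.
      eapply is_series_Rext; [| |exact H]. reflexivity. simpl. ring. }
    pose proof (is_series_Cmod_le _ _ _ _ S5 Hb) as HH.
    replace (Lser (z + d) - Lser z - RtoC h * (y / (1 - z))) with
      (Lser (z + d) - Lser z - ((z + d) ^ 0 / RtoC (INR 0) - z ^ 0 / RtoC (INR 0)) - d * / (1 - z)).
    2:{ simpl. rewrite !Cdiv_0. unfold d. field. apply Hnz; auto. }
    eapply Rle_trans. apply HH.
    + intros [|k].
      * simpl. replace ((z + d) * 1 / RtoC 1 - z * 1 / RtoC 1 - d * 1) with (RtoC 0) by (field; apply RtoC_neq0; lra).
        rewrite Cmod_0. lra.
      * replace ((z + d) ^ S (S k) / RtoC (INR (S (S k))) - z ^ S (S k) / RtoC (INR (S (S k))) - d * z ^ S k)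
          with (((z+d)^(S (S k)) - z^(S (S k)) - RtoC (INR (S (S k))) * d * z^(S k)) / RtoC (INR (S (S k)))).
        2:{ field. apply RtoC_neq0, not_0_INR; lia. }
        assert (HSS : (0 < INR (S (S k)))%R) by (apply lt_0_INR; lia).
        rewrite Cmod_div_R by auto.
        pose proof (Ebound z d p k Hz Hz2) as HE.
        assert (Cmod d ^ 2 <= h ^ 2)%R by (apply pow_incr; split; auto using Cmod_ge_0).
        assert (0 <= INR (S k))%R by apply pos_INR.
        assert (0 <= p ^ k)%R by (apply pow_le; lra).
        apply Rmult_le_reg_r with (INR (S (S k))); auto.
        unfold Rdiv at 1. rewrite Rmult_assoc, Rinv_l by lra. rewrite Rmult_1_r.
        eapply Rle_trans. exact HE.
        assert (Hfin : (INR (S (S k)) * INR (S k) / 2 * Cmod d ^ 2 * p ^ k <= INR (S (S k)) * INR (S k) / 2 * h ^ 2 * p ^ k)%R).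
        { apply Rmult_le_compat_r; auto. apply Rmult_le_compat_l; auto.
          apply Rmult_le_pos; [apply Rmult_le_pos|]; lra. }
        eapply Rle_trans; [exact Hfin|]. right. unfold b. field.
    + right. field. lra.
Qed.

Lemma L_exp (y : C) : (Cmod y < 1)%R -> (1 - y) * Cexp (Lser y) = 1.
Proof.
  intros Hy.
  pose proof (QD_mult _ _ _ _ _ _ _ _ (QD_lin 1 (- y)) (QD_exp _ _ _ _ (QD_L y (Cmod y) (Rle_refl _) Hy))) as H.
  apply QD_const in H.
  - simpl in H. replace (RtoC 1 * y) with y in H by ring. replace (RtoC 0 * y) with (RtoC 0) in H by ring.
    rewrite Lser_0, Cexp_0 in H. transitivity ((1 + RtoC 1 * - y) * Cexp (Lser y)). ring. rewrite H. ring.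
  - intros t Ht. simpl. field.
    intros Heq. pose proof (Cmod_1_minus (RtoC t * y)). rewrite Heq, Cmod_0 in H0.
    pose proof (Cmod_tscale t y (Cmod y) Ht (Rle_refl _)). lra.
Qed.

Lemma Cpow_mul (a b : C) k : (a * b) ^ k = a ^ k * b ^ k.
Proof. induction k; simpl. ring. rewrite IHk. ring. Qed.

Lemma Cpow_1 k : (RtoC 1) ^ k = 1.
Proof. induction k; simpl. ring. rewrite IHk. ring. Qed.

Lemma Cpow_inv (q : C) k : q <> 0 -> (/ q) ^ k * q ^ k = 1.
Proof. intros Hq. rewrite <- Cpow_mul. replace (/ q * q) with (RtoC 1) by (field; auto). apply Cpow_1. Qed.

Lemma pow_le1 (x : R) n : (0 <= x <= 1)%R -> (x ^ n <= 1)%R.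
Proof.
  intros Hx. induction n; simpl. lra. pose proof (pow_le x n ltac:(lra)). nra.
Qed.

Lemma Cmod_minus_1 (w : C) : (Cmod w - 1 <= Cmod (w - 1))%R.
Proof.
  pose proof (Cmod_triangle (w - 1) 1). replace (w - 1 + 1) with w in H by ring.
  rewrite Cmod_1 in H. lra.
Qed.

Lemma Cmult_neq0 (a b : C) : a <> 0 -> b <> 0 -> a * b <> 0.
Proof.
  intros Ha Hb H. apply (f_equal Cmod) in H. rewrite Cmod_mult, Cmod_0 in H.
  apply Rmult_integral in H. destruct H as [H|H]; apply Cmod_eq_0 in H; auto.
Qed.

Lemma Cmod_sym1 (w : C) : Cmod (1 - w) = Cmod (w - 1).
Proof. replace (1 - w) with ((- (1)) * (w - 1)) by ring. rewrite Cmod_mult, Cmod_m1. ring. Qed.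

Section Q.
Variable q : C.
Hypothesis hq : (1 < Cmod q)%R.

Let r := Cmod q.

Lemma q_neq0 : q <> 0.
Proof. intro H. unfold r in *. rewrite H, Cmod_0 in hq. lra. Qed.

Lemma qk_bound k : (r ^ k - 1 <= Cmod (q ^ k - 1))%R.
Proof. unfold r. rewrite <- Cmod_pow. apply Cmod_minus_1. Qed.

Lemma rk_ge1 k : (1 <= r ^ k)%R.
Proof. apply pow_R1_Rle. unfold r; lra. Qed.

Lemma rSk_gt1 k : (1 < r ^ S k)%R.
Proof. simpl. pose proof (rk_ge1 k). unfold r in *. nra. Qed.

Lemma qk_neq1 k : q ^ S k - 1 <> 0.
Proof.
  intro H. pose proof (qk_bound (S k)). rewrite H, Cmod_0 in H0. pose proof (rSk_gt1 k). lra.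
Qed.

Lemma qpoch_neq0 n : qpoch q n <> 0.
Proof.
  induction n.
  - simpl. apply RtoC_neq0. lra.
  - change (qpoch q (S n)) with (qpoch q n * (1 - q ^ S n)). apply Cmult_neq0; auto. intro H.
    apply (qk_neq1 n). replace (q ^ S n - 1) with (- (1 - q ^ S n)) by ring. rewrite H. ring.
Qed.

Definition cf n := / qpoch q n.

Lemma cf_bound : exists M0, (0 <= M0)%R /\ forall n, (Cmod (cf n) * 2 ^ n <= M0)%R.
Proof.
  pose proof (is_lim_seq_geom_p r hq) as H. apply is_lim_seq_spec in H. destruct (H 3%R) as [K HK].
  set (a := fun n => (Cmod (cf n) * 2 ^ n)%R).
  assert (Hstep : forall n, (K <= n)%nat -> (a (S n) <= a n)%R).
  { intros n Hn. unfold a, cf. change (qpoch q (S n)) with (qpoch q n * (1 - q ^ S n)).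
    assert (Hn1 : 1 - q ^ S n <> 0).
    { intro E. apply (qk_neq1 n). replace (q ^ S n - 1) with (- (1 - q ^ S n)) by ring. rewrite E. ring. }
    replace (/ (qpoch q n * (1 - q ^ S n))) with (/ qpoch q n * / (1 - q ^ S n)) by (field; split; auto using qpoch_neq0).
    rewrite Cmod_mult. 
    rewrite Cmod_inv with (x := 1 - q ^ S n) by auto.
    rewrite Cmod_sym1. pose proof (qk_bound (S n)). specialize (HK (S n) ltac:(lia)). 
    assert (2 <= Cmod (q ^ S n - 1))%R by lra.
    assert (0 < / Cmod (q ^ S n - 1) <= / 2)%R by (split; [apply Rinv_0_lt_compat; lra| apply Rinv_le_contravar; lra]).
    pose proof (Cmod_ge_0 (/ qpoch q n)). pose proof (pow_le 2 n ltac:(lra)).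
    change (2 ^ S n)%R with (2 * 2 ^ n)%R. set (X := (Cmod (/ qpoch q n) * 2 ^ n)%R). assert (0 <= X)%R by (unfold X; nra).
    replace (Cmod (/ qpoch q n) * / Cmod (q ^ S n - 1) * (2 * 2 ^ n))%R with (X * (2 * / Cmod (q ^ S n - 1)))%R by (unfold X; ring).
    apply Rle_trans with (X * 1)%R; [apply Rmult_le_compat_l; lra | lra]. }
  set (mx := fix mx n := match n with O => a 0%nat | S n' => Rmax (mx n') (a (S n')) end).
  assert (Hmx : forall n m, (m <= n)%nat -> (a m <= mx n)%R).
  { induction n; intros m Hm.
    - replace m with 0%nat by lia. simpl. lra.
    - simpl. destruct (Nat.eq_dec m (S n)). subst. apply Rmax_r.
      eapply Rle_trans. apply IHn. lia. apply Rmax_l. }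
  exists (mx K). split.
  - eapply Rle_trans; [|apply (Hmx K 0%nat); lia]. unfold a. pose proof (Cmod_ge_0 (cf 0)). pose proof (pow_le 2 0 ltac:(lra)). nra.
  - intros n. destruct (Nat.le_gt_cases n K). apply Hmx; auto.
    induction n. lia. destruct (Nat.eq_dec n K). subst. eapply Rle_trans. apply Hstep; auto. apply Hmx; auto.
    eapply Rle_trans. apply Hstep; lia. apply IHn. lia.
Qed.


Lemma cf_bound' : exists M0, (0 <= M0)%R /\ forall n, (Cmod (cf n) <= M0 * (/ 2) ^ n)%R.
Proof.
  destruct cf_bound as [M0 [H0 H]]. exists M0. split; auto. intros n.
  specialize (H n). rewrite <- Rinv_pow by lra. pose proof (pow_lt 2 n ltac:(lra)).
  apply Rmult_le_reg_r with (2 ^ n)%R; auto. rewrite Rmult_assoc, Rinv_l by lra. lra.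
Qed.

Lemma f1_props : exists Cf, (0 <= Cf)%R /\ forall y, (Cmod y <= 1)%R ->
  is_series (fun n => y ^ n / qpoch q n) (f1 q y) /\ (Cmod (f1 q y - 1) <= Cf * Cmod y)%R.
Proof.
  destruct cf_bound' as [M0 [H0 H]]. exists (M0 * 2)%R. split. lra. intros y Hy.
  assert (Hg : is_series (fun n => (/2) ^ n)%R 2%R).
  { apply (is_series_Rext (fun n => (/2)^n)%R _ (/ (1 - /2))%R); [reflexivity| field | apply is_series_geom; rewrite Rabs_pos_eq; lra]. }
  assert (Hs : is_series (fun n => y ^ n / qpoch q n) (f1 q y)).
  { apply Csum_dom with (b := fun n => (M0 * (/ 2) ^ n)%R) (lb := (M0 * 2)%R).
    - intros n. unfold Cdiv. rewrite Cmod_mult, Cmod_pow. fold (cf n).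
      pose proof (pow_le (Cmod y) n (Cmod_ge_0 y)). pose proof (pow_le _ n (Cmod_ge_0 y)).
      assert (Cmod y ^ n <= 1)%R by (apply pow_le1; split; auto using Cmod_ge_0).
      specialize (H n). pose proof (Cmod_ge_0 (cf n)). nra.
    - apply is_series_Rscal. auto. }
  split; auto.
  pose proof (is_series_Cshift _ _ Hs) as Hs1.
  assert (E : y ^ 0 / qpoch q 0 = 1) by (simpl; field).
  cbv beta in Hs1. rewrite E in Hs1.
  eapply Rle_trans. apply (is_series_Cmod_le _ _ _ _ Hs1 (is_series_Rscal (Cmod y * M0 * /2)%R _ _ Hg)).
  - intros n. unfold Cdiv. rewrite Cmod_mult, Cmod_pow. fold (cf (S n)).
    specialize (H (S n)). simpl in H |- *.
    assert (Cmod y ^ n <= 1)%R by (apply pow_le1; split; auto using Cmod_ge_0).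
    pose proof (pow_le (Cmod y) n (Cmod_ge_0 y)). pose proof (Cmod_ge_0 y).
    pose proof (pow_le (/2) n ltac:(lra)). pose proof (Cmod_ge_0 (cf (S n))).
    assert (Cmod y * Cmod y ^ n <= Cmod y)%R by nra.
    apply Rle_trans with (Cmod y * Cmod (cf (S n)))%R. apply Rmult_le_compat_r; auto.
    replace (Cmod y * M0 * / 2 * (/ 2) ^ n)%R with (Cmod y * (M0 * (/ 2 * (/ 2) ^ n)))%R by ring.
    apply Rmult_le_compat_l; auto.
  - pose proof (Cmod_ge_0 y). nra.
Qed.


Lemma qpow_neq0 k : q ^ k <> 0.
Proof.
  intro H. apply (f_equal Cmod) in H. rewrite Cmod_pow, Cmod_0 in H.
  pose proof (rk_ge1 k). unfold r in *. lra.
Qed.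

Lemma Cpow_div (x : C) k : (x / q) ^ k = x ^ k / q ^ k.
Proof.
  unfold Cdiv. rewrite Cpow_mul. f_equal.
  pose proof (Cpow_inv q k q_neq0). pose proof (qpow_neq0 k).
  replace ((/ q) ^ k) with ((/ q) ^ k * q ^ k * / q ^ k) by (field; auto). rewrite H. ring.
Qed.

Lemma Cmod_divq (x : C) : Cmod (x / q) = (Cmod x / r)%R.
Proof. rewrite Cmod_div by apply q_neq0. reflexivity. Qed.

Lemma f1_fe (x : C) : (Cmod x <= 1)%R -> f1 q x = (1 - x / q) * f1 q (x / q).
Proof.
  intros Hx. destruct f1_props as [Cf [_ Hf]].
  set (y := x / q).
  assert (Hy : (Cmod y <= 1)%R).
  { unfold y. rewrite Cmod_divq. unfold r. apply Rmult_le_reg_r with (Cmod q). lra.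
    unfold Rdiv. rewrite Rmult_assoc, Rinv_l by lra. lra. }
  assert (Hxy : x = q * y) by (unfold y; field; apply q_neq0).
  destruct (Hf x Hx) as [Sx _]. destruct (Hf y Hy) as [Sy _].
  pose proof (is_series_Cshift _ _ (is_series_Cminus _ _ _ _ Sy Sx)) as H1.
  pose proof (is_series_Cscal y _ _ Sy) as H2.
  assert (H3 : is_series (fun n => y * (y ^ n / qpoch q n)) (f1 q y - f1 q x - (y ^ 0 / qpoch q 0 - x ^ 0 / qpoch q 0))).
  { eapply is_series_Cext; [| reflexivity | exact H1]. intros n. cbv beta.
    rewrite Hxy, Cpow_mul. change (qpoch q (S n)) with (qpoch q n * (1 - q ^ S n)).
    assert (Hn1 : 1 - q ^ S n <> 0).
    { intro E. apply (qk_neq1 n). replace (q ^ S n - 1) with (- (1 - q ^ S n)) by ring. rewrite E. ring. }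
    pose proof (qpoch_neq0 n). change (y ^ S n) with (y * y ^ n). field. auto. }
  pose proof (is_series_C_unique _ _ _ H3 H2) as E.
  simpl in E. replace (f1 q x) with (f1 q y - y * f1 q y). ring.
  rewrite <- E. field.
Qed.

Definition Aq (k : nat) (x : C) : C := x ^ k / (RtoC (INR k) * (q ^ k - RtoC 1)).
Definition Sq (x : C) : C := Csum (fun k => Aq k x).

Let p := (/ r)%R.
Let kap := (r / (r - 1))%R.

Lemma p_props : (0 < p < 1)%R.
Proof. unfold p, r. split. apply Rinv_0_lt_compat; lra. rewrite <- Rinv_1. apply Rinv_lt_contravar; lra. Qed.

Lemma kap_pos : (0 < kap)%R.
Proof. unfold kap, r. apply Rdiv_lt_0_compat; lra. Qed.

Lemma Aq0 x : Aq 0 x = 0.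
Proof. unfold Aq. replace (RtoC (INR 0) * (q ^ 0 - RtoC 1)) with (RtoC 0) by (simpl; ring). apply Cdiv_0. Qed.

Lemma Aq_bound k x : (Cmod (Aq k x) <= kap * (p * Cmod x) ^ k)%R.
Proof.
  pose proof kap_pos. pose proof p_props. destruct k as [|j].
  - rewrite Aq0, Cmod_0. simpl. lra.
  - set (k := S j). unfold Aq.
    assert (Hk : (1 <= INR k)%R) by (apply (le_INR 1); unfold k; lia).
    pose proof (qk_bound k) as Hq. pose proof (rSk_gt1 j) as Hr. fold k in Hr.
    assert (Hrk : (r ^ k - 1 >= (r - 1) * r ^ j)%R).
    { unfold k. simpl. pose proof (rk_ge1 j). unfold r in *. nra. }
    rewrite Cmod_div. 2:{ apply Cmult_neq0. apply RtoC_neq0; lra. apply qk_neq1. }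
    rewrite Cmod_mult, Cmod_R, Rabs_pos_eq, Cmod_pow by lra.
    rewrite Rpow_mult_distr.
    assert (Hpr : (p ^ k * r ^ k = 1)%R).
    { rewrite <- Rpow_mult_distr. unfold p. rewrite Rinv_l. apply pow1. unfold r; lra. }
    pose proof (pow_le (Cmod x) k (Cmod_ge_0 x)).
    assert (HD : (0 < r ^ k - 1)%R) by lra.
    assert (Hden : (r ^ k / kap <= INR k * Cmod (q ^ k - 1))%R).
    { unfold kap. replace (r ^ k / (r / (r - 1)))%R with ((r - 1) * r ^ j)%R.
      2:{ unfold k. simpl. field. unfold r in *. lra. }
      apply Rle_trans with (1 * (r ^ k - 1))%R. lra. apply Rmult_le_compat; lra. }
    assert (Hrk0 : (0 < r ^ k / kap)%R) by (apply Rdiv_lt_0_compat; lra).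
    unfold Rdiv. rewrite (Rmult_comm (Cmod x ^ k)).
    assert (Hpk : (p ^ k = / r ^ k)%R).
    { apply Rmult_eq_reg_r with (r ^ k)%R; [rewrite Hpr, Rinv_l; lra | lra]. }
    replace (kap * (p ^ k * Cmod x ^ k))%R with (/ (r ^ k / kap) * Cmod x ^ k)%R
      by (rewrite Hpk; field; split; lra).
    apply Rmult_le_compat_r; auto. apply Rinv_le_contravar; auto.
Qed.


Lemma S_tail m x : (Cmod x <= 1)%R -> is_series (fun k => Aq k x) (Sq x) /\
  (Cmod (Sq x - sum_n (fun k => Aq k x) m) <= kap * p / (1 - p) * Cmod x ^ (S m))%R.
Proof.
  intros Hx. pose proof kap_pos. pose proof p_props. pose proof (Cmod_ge_0 x).
  assert (Hu : (0 <= p * Cmod x < 1)%R) by (split; nra).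
  destruct (Csum_dom (fun k => Aq k x) (fun k => kap * (p * Cmod x) ^ k)%R (kap * / (1 - p * Cmod x))%R) as [Hs _].
  - intros k. apply Aq_bound.
  - apply is_series_Rscal. apply is_series_geom. rewrite Rabs_pos_eq; lra.
  - split; auto. fold (Sq x) in Hs.
    pose proof (is_series_Ctail _ _ m Hs) as Ht.
    assert (Hg : is_series (fun k => (kap * p * Cmod x ^ S m) * p ^ k)%R ((kap * p * Cmod x ^ S m) * / (1 - p))%R).
    { apply is_series_Rscal. apply is_series_geom. rewrite Rabs_pos_eq; lra. }
    eapply Rle_trans. apply (is_series_Cmod_le _ _ _ _ Ht Hg).
    + intros k. eapply Rle_trans. apply Aq_bound.
      rewrite Rpow_mult_distr, !pow_add.
      set (P1 := (p ^ S m)%R). set (P2 := (p ^ k)%R). set (X1 := (Cmod x ^ S m)%R). set (X2 := (Cmod x ^ k)%R).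
      assert (0 <= P1 <= p)%R. { unfold P1. simpl. pose proof (pow_le1 p m ltac:(lra)). pose proof (pow_le p m ltac:(lra)). split; nra. }
      assert (0 <= P2)%R by (apply pow_le; lra).
      assert (0 <= X1)%R by (apply pow_le; lra).
      assert (0 <= X2 <= 1)%R by (split; [apply pow_le; lra | apply pow_le1; lra]).
      assert (0 <= (p - P1) * P2 * X1 * X2)%R by (apply Rmult_le_pos; [apply Rmult_le_pos; [apply Rmult_le_pos|]|]; lra).
      assert (0 <= p * P2 * X1 * (1 - X2))%R by (apply Rmult_le_pos; [apply Rmult_le_pos; [apply Rmult_le_pos|]|]; lra).
      assert (P1 * P2 * (X1 * X2) <= p * X1 * P2)%R by nra.
      replace (kap * p * X1 * P2)%R with (kap * (p * X1 * P2))%R by ring.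
      apply Rmult_le_compat_l; lra.
    + right. field. lra.
Qed.

Lemma divq_lt x : (Cmod x <= 1)%R -> (Cmod (x / q) <= Cmod x * p)%R /\ (Cmod (x / q) < 1)%R.
Proof.
  intros Hx. rewrite Cmod_divq. pose proof p_props. pose proof (Cmod_ge_0 x). unfold p in *.
  unfold Rdiv. split; nra.
Qed.

Lemma S_L x : (Cmod x <= 1)%R -> Sq x = Sq (x / q) + Lser (x / q).
Proof.
  intros Hx.
  destruct (divq_lt x Hx) as [_ Hy1].
  assert (Hy2 : (Cmod (x / q) <= 1)%R) by lra.
  destruct (S_tail 0 x Hx) as [S1 _]. destruct (S_tail 0 (x / q) Hy2) as [S2 _].
  destruct (Lser_correct (x / q) (Cmod (x / q)) (Rle_refl _) Hy1) as [S3 _].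
  pose proof (is_series_Cminus _ _ _ _ S1 S2) as S4.
  assert (S5 : is_series (fun k => (x / q) ^ k / RtoC (INR k)) (Sq x - Sq (x / q))).
  { eapply is_series_Cext; [| reflexivity | exact S4]. intros [|j].
    - rewrite !Aq0. simpl. rewrite Cdiv_0. ring.
    - unfold Aq. rewrite Cpow_div. pose proof (qpow_neq0 (S j)). pose proof (qk_neq1 j).
      assert (RtoC (INR (S j)) <> 0) by (apply RtoC_neq0, not_0_INR; lia).
      field. repeat split; auto. }
  pose proof (is_series_C_unique _ _ _ S5 S3) as E. rewrite <- E. ring.
Qed.

Definition g (x : C) := f1 q x * Cexp (Sq x).

Lemma g_fe x : (Cmod x <= 1)%R -> g x = g (x / q).
Proof.
  intros Hx. unfold g. destruct (divq_lt x Hx) as [_ Hy1].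
  rewrite (f1_fe x Hx), (S_L x Hx), Cexp_add.
  pose proof (L_exp (x / q) Hy1) as E.
  transitivity (f1 q (x / q) * Cexp (Sq (x / q)) * ((1 - x / q) * Cexp (Lser (x / q)))). ring.
  rewrite E. ring.
Qed.

Lemma Cexp_m1 (w : C) (R0 : R) : (Cmod w <= R0)%R -> (Cmod (Cexp w - 1) <= Cmod w * (1 + R0 * exp R0 / 2))%R.
Proof.
  intros Hw. pose proof (Cmod_ge_0 w).
  assert (H0 : (Cmod 0 <= R0)%R) by (rewrite Cmod_0; lra).
  assert (H1 : (Cmod (0 + w) <= R0)%R) by (replace (0 + w) with w by ring; auto).
  pose proof (Cexp_deriv 0 w R0 H0 H1) as HD.
  replace (0 + w) with w in HD by ring. rewrite Cexp_0 in HD.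
  replace (Cexp w - 1) with ((Cexp w - 1 - w * 1) + w) by ring.
  eapply Rle_trans. apply Cmod_triangle.
  pose proof (exp_pos R0).
  assert (Cmod w ^ 2 / 2 * exp R0 <= Cmod w * (R0 * exp R0 / 2))%R.
  { simpl. assert (Cmod w * Cmod w <= Cmod w * R0)%R by (apply Rmult_le_compat_l; lra). nra. }
  nra.
Qed.

Lemma g_near0 : exists Cg, (0 <= Cg)%R /\ forall y, (Cmod y <= 1)%R -> (Cmod (g y - 1) <= Cg * Cmod y)%R.
Proof.
  destruct f1_props as [Cf [HCf Hf]].
  pose proof kap_pos. pose proof p_props.
  set (K1 := (kap * p / (1 - p))%R).
  assert (HK1 : (0 <= K1)%R) by (unfold K1; apply Rmult_le_pos; [nra| left; apply Rinv_0_lt_compat; lra]).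
  pose proof (exp_pos K1).
  exists (Cf * exp K1 + K1 * (1 + K1 * exp K1 / 2))%R. split.
  { assert (0 <= K1 * exp K1)%R by nra. nra. }
  intros y Hy. pose proof (Cmod_ge_0 y).
  destruct (Hf y Hy) as [_ Hf1]. destruct (S_tail 0 y Hy) as [_ HS].
  rewrite sum_O, Aq0 in HS. replace (Sq y - 0) with (Sq y) in HS by ring. fold K1 in HS. simpl in HS.
  rewrite Rmult_1_r in HS.
  assert (HS1 : (Cmod (Sq y) <= K1)%R) by nra.
  unfold g. replace (f1 q y * Cexp (Sq y) - 1) with ((f1 q y - 1) * Cexp (Sq y) + (Cexp (Sq y) - 1)) by ring.
  eapply Rle_trans. apply Cmod_triangle.
  pose proof (Cmod_mult_le _ _ _ _ Hf1 (Cexp_bound _ _ HS1)) as T1.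
  pose proof (Cexp_m1 _ _ HS1) as T2.
  assert (0 <= 1 + K1 * exp K1 / 2)%R by (assert (0 <= K1 * exp K1)%R by nra; nra).
  assert (Cmod (Sq y) * (1 + K1 * exp K1 / 2) <= K1 * Cmod y * (1 + K1 * exp K1 / 2))%R
    by (apply Rmult_le_compat_r; auto).
  nra.
Qed.

Lemma g_one x : (Cmod x <= 1)%R -> g x = 1.
Proof.
  intros Hx. destruct g_near0 as [Cg [HCg Hg]]. pose proof p_props. pose proof (Cmod_ge_0 x).
  assert (Hn : forall n, g x = g (x / q ^ n) /\ (Cmod (x / q ^ n) <= Cmod x * p ^ n)%R).
  { induction n.
    - simpl. replace (x / 1) with x by field. split; auto. lra.
    - destruct IHn as [IH1 IH2].
      assert (Hb : (Cmod (x / q ^ n) <= 1)%R).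
      { eapply Rle_trans. exact IH2. pose proof (pow_le1 p n ltac:(lra)). pose proof (pow_le p n ltac:(lra)). nra. }
      destruct (divq_lt _ Hb) as [D1 _].
      assert (E : x / q ^ S n = x / q ^ n / q).
      { change (q ^ S n) with (q * q ^ n). field. split; [apply qpow_neq0| apply q_neq0]. }
      rewrite E. split. rewrite IH1. apply g_fe; auto.
      eapply Rle_trans. exact D1. simpl.
      assert (Cmod (x / q ^ n) * p <= Cmod x * p ^ n * p)%R by (apply Rmult_le_compat_r; lra). nra. }
  assert (Hd : forall n, (Cmod (g x - 1) <= Cg * p ^ n)%R).
  { intros n. destruct (Hn n) as [E B]. rewrite E.
    assert (Hb : (Cmod (x / q ^ n) <= 1)%R).
    { eapply Rle_trans. exact B. pose proof (pow_le1 p n ltac:(lra)). pose proof (pow_le p n ltac:(lra)). nra. }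
    eapply Rle_trans. apply Hg; auto. apply Rmult_le_compat_l; auto.
    pose proof (pow_le p n ltac:(lra)). nra. }
  set (d := Cmod (g x - 1)).
  assert (Hd0 : d = 0%R).
  { destruct (Rle_lt_or_eq_dec 0 d (Cmod_ge_0 _)) as [Hp|Hp]; auto.
    exfalso. destruct (Rle_lt_or_eq_dec 0 Cg HCg) as [Hc|Hc].
    - destruct (pow_lt_1_zero p ltac:(rewrite Rabs_pos_eq; lra) (d / Cg)%R ltac:(apply Rdiv_lt_0_compat; lra)) as [N HN].
      specialize (HN N (le_n _)). rewrite Rabs_pos_eq in HN by (apply pow_le; lra).
      specialize (Hd N). fold d in Hd.
      assert (Hlt : (Cg * p ^ N < Cg * (d / Cg))%R) by (apply Rmult_lt_compat_l; auto).
      replace (Cg * (d / Cg))%R with d in Hlt by (field; lra). lra.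
    - specialize (Hd 0%nat). fold d in Hd. rewrite <- Hc in Hd. lra. }
  apply Cmod_eq_0 in Hd0. replace (g x) with (g x - 1 + 1) by ring. rewrite Hd0. ring.
Qed.

Lemma main_bound : exists C1, (0 < C1)%R /\ forall m x, (Cmod x <= 1)%R ->
  (Cmod (RtoC 1 - Etilde q m x) <= C1 * Cmod x ^ (m + 1))%R.
Proof.
  pose proof kap_pos. pose proof p_props.
  set (K2 := (kap * p / (1 - p))%R).
  assert (HK2 : (0 <= K2)%R) by (unfold K2; apply Rmult_le_pos; [nra| left; apply Rinv_0_lt_compat; lra]).
  pose proof (exp_pos K2).
  assert (HA : (0 <= 1 + K2 * exp K2 / 2)%R) by (assert (0 <= K2 * exp K2)%R by nra; nra).
  exists (K2 * (1 + K2 * exp K2 / 2) + 1)%R. split. nra.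
  intros m x Hx. pose proof (Cmod_ge_0 x).
  assert (Hxp : (0 <= Cmod x ^ (m + 1))%R) by (apply pow_le; lra).
  assert (Hxp1 : (Cmod x ^ (m + 1) <= 1)%R) by (apply pow_le1; lra).
  destruct m as [|m'].
  - simpl Etilde. replace (RtoC 1 - RtoC 1) with (RtoC 0) by ring. rewrite Cmod_0. apply Rmult_le_pos; [nra|auto].
  - set (Sm := sum_n_m (fun k => Aq k x) 1 (S m')).
    change (Etilde q (S m') x) with (f1 q x * Cexp Sm).
    assert (Hsum : sum_n (fun k => Aq k x) (S m') = Sm).
    { unfold sum_n. rewrite sum_Sn_m by lia. rewrite Aq0. unfold Sm.
      change (0 + sum_n_m (fun k => Aq k x) 1 (S m') = sum_n_m (fun k => Aq k x) 1 (S m')). ring. }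
    destruct (S_tail (S m') x Hx) as [_ HT]. rewrite Hsum in HT. fold K2 in HT.
    set (T := Sq x - Sm) in HT.
    assert (Hg : g x = 1) by (apply g_one; auto).
    assert (E : f1 q x * Cexp Sm = Cexp (- T)).
    { assert (E1 : Cexp T * Cexp (- T) = 1) by (rewrite <- Cexp_add; replace (T + - T) with (RtoC 0) by ring; apply Cexp_0).
      assert (E2 : Sq x = Sm + T) by (unfold T; ring).
      transitivity (f1 q x * Cexp Sm * (Cexp T * Cexp (- T))). rewrite E1; ring.
      transitivity (g x * Cexp (- T)). unfold g. rewrite E2, Cexp_add. ring.
      rewrite Hg. ring. }
    rewrite E. replace (RtoC 1 - Cexp (- T)) with (- (1) * (Cexp (- T) - 1)) by ring.
    rewrite Cmod_mult, Cmod_m1, Rmult_1_l.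
    assert (HmT : Cmod (- T) = Cmod T).
    { replace (- T) with (- (1) * T) by ring. rewrite Cmod_mult, Cmod_m1. ring. }
    replace (S m' + 1)%nat with (S (S m')) in * by lia.
    assert (HT2 : (Cmod (- T) <= K2)%R) by (rewrite HmT; nra).
    eapply Rle_trans. apply (Cexp_m1 _ _ HT2). rewrite HmT.
    assert (Cmod T * (1 + K2 * exp K2 / 2) <= K2 * Cmod x ^ S (S m') * (1 + K2 * exp K2 / 2))%R
      by (apply Rmult_le_compat_r; auto).
    nra.
Qed.

End Q.

Theorem lemma2p7 (q : C) (hq : (1 < Cmod q)%R) :
  exists C1 C2 : R, (0 < C1)%R /\ (0 < C2)%R /\
    forall (m : nat) (x : C), (Cmod x <= 1)%R ->
      (Cmod (RtoC 1 - Etilde q m x) <= C1 * (C2 * Cmod x) ^ (m + 1))%R.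
Proof.
  destruct (main_bound q hq) as [C1 [HC1 H]]. exists C1, 1%R. split; auto. split. lra.
  intros m x Hx. rewrite Rmult_1_l. apply H; auto.
Qed.
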